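(* Let $M$ be a matroid with lattice of flats $L$ and rank function giving $r_{FG}=\operatorname{rk}G-\operatorname{rk}F$, and consider the weakly ranked poset $(L,2r)$. Define $\kappa\in\mathscr{I}(L,2r)$ by $$\kappa_{FH}(t):=(t-1)^{r_{FH}}\sum_{F\le G\le H}(-1)^{r_{FG}}\chi_{FG}(-1)\chi_{GH}(t),$$ and $h^{\mathrm{bc}}\in\mathscr{I}_{1/2}(L,2r)$ by $h^{\mathrm{bc}}_{FG}(t):=(-t)^{r_{FG}}\chi_{FG}(1-t^{-1})$. Then $\kappa$ is an $(L,2r)$-kernel, and $h^{\mathrm{bc}}$ is its left KLS-function.
   Context: For a locally finite poset $P$ with weak rank function $\rho$ (integers $\rho_{xy}$ for $x\le y$, positive for $x<y$, additive: $\rho_{xy}+\rho_{yz}=\rho_{xz}$): $I(P)=\prod_{x\le y}\mathbb{Z}[t]$ is a ring under convolution $(fg)_{xz}=\sum_{x\le y\le z}f_{xy}g_{yz}$; $\mathscr{I}(P,\rho)$ is the subring of $f$ with $\deg f_{xy}\le\rho_{xy}$, with involution $\bar f_{xy}(t)=t^{\rho_{xy}}f_{xy}(t^{-1})$; $\mathscr{I}_{1/2}(P,\rho)$ consists of $f\in\mathscr{I}(P,\rho)$ with $f_{xx}=1$ and $\deg f_{xy}<\rho_{xy}/2$ for $x<y$. A $(P,\rho)$-kernel is $\kappa\in\mathscr{I}(P,\rho)$ with $\kappa_{xx}=1$ and $\kappa^{-1}=\bar\kappa$; its left KLS-function is the unique $g\in\mathscr{I}_{1/2}(P,\rho)$ with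 $\bar g=g\kappa$. Here $(L,2r)$ means $L$ (ordered by inclusion) with weak rank function $\rho=2r$. The characteristic function is $\chi_{FG}(t)=\sum_{F\le E\le G}\mu_{FE}\,t^{r_{EG}}$, where $\mu$ is the Möbius function of $L$ (the inverse in $I(L)$ of the all-ones function $\zeta$). *)

(* Defs.v *)
From HB Require Import structures.
From mathcomp Require Import all_boot all_order all_algebra.
Set Implicit Arguments. Unset Strict Implicit. Unset Printing Implicit Defensive.
Import GRing.Theory Num.Theory.
Local Open Scope ring_scope.

Record matroid (T : finType) := Matroid {
  mrank : {set T} -> nat;
  mrank_card : forall A, (mrank A <= #|A|)%N;
  mrank_mono : forall A B : {set T}, A \subset B -> (mrank A <= mrank B)%N;
  mrank_submod : forall A B : {set T},
      (mrank (A :|: B) + mrank (A :&: B) <= mrank A + mrank B)%N }.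

Section Matroid.
Variables (T : finType) (M : matroid T).

Definition is_flat (F : {set T}) : bool :=
  [forall e, (e \notin F) ==> (mrank M F < mrank M (e |: F))%N].

Definition flat_le (F G : {set T}) : bool := [&& is_flat F, is_flat G & F \subset G].

Definition rr (F G : {set T}) : nat := (mrank M G - mrank M F)%N.

(* Elements of I(L) : functions on pairs F <= G with values in Z[t]
   (values on other pairs are irrelevant). *)
Definition incid := {set T} -> {set T} -> {poly int}.

Definition conv (f g : incid) : incid := fun F H =>
  \sum_(G : {set T} | flat_le F G && flat_le G H) f F G * g G H.

Definition delta : incid := fun F H => (F == H)%:R.

Definition ieq (f g : incid) : Prop := forall F G, flat_le F G -> f F G = g F G.

(* Möbius function of L, by the standard recursion mu * zeta = delta
   (with fuel n >= #|G|). *)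
Fixpoint mob_aux (n : nat) (F G : {set T}) : int :=
  if F == G then 1 else
  match n with
  | 0 => 0
  | n'.+1 => if flat_le F G then
               - \sum_(E : {set T} | flat_le F E && flat_le E G && (E != G)) mob_aux n' F E
             else 0
  end.
Definition mobius (F G : {set T}) : int := mob_aux #|G| F G.

Definition chi : incid := fun F G =>
  \sum_(E : {set T} | flat_le F E && flat_le E G) (mobius F E)%:~R *: 'X^(rr E G).

(* For a polynomial p of degree <= n:  t^n p(t^{-1})  *)
Definition recip_poly (n : nat) (p : {poly int}) : {poly int} :=
  \sum_(i < n.+1) p`_i *: 'X^(n - i).

(* For a polynomial p of degree <= n:  t^n p(1 - t^{-1}) *)
Definition homog_one_minus_inv (n : nat) (p : {poly int}) : {poly int} :=
  \sum_(i < n.+1) p`_i *: (('X - 1) ^+ i * 'X^(n - i)).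

Definition rho (F G : {set T}) : nat := (2 * rr F G)%N.
Definition ibar (f : incid) : incid := fun F G => recip_poly (rho F G) (f F G).

Definition in_Irho (f : incid) : Prop :=
  forall F G, flat_le F G -> (size (f F G) <= (rho F G).+1)%N.

(* f in I_{1/2}(L, 2r): f_FF = 1 and deg f_FG < rho_FG / 2 = r_FG for F < G *)
Definition in_Ihalf (f : incid) : Prop :=
  [/\ in_Irho f,
      (forall F, is_flat F -> f F F = 1) &
      (forall F G, flat_le F G -> F != G -> (size (f F G) <= rr F G)%N)].

Definition is_kernel (k : incid) : Prop :=
  [/\ in_Irho k,
      (forall F, is_flat F -> k F F = 1),
      ieq (conv k (ibar k)) delta &
      ieq (conv (ibar k) k) delta].

Definition is_left_KLS (k g : incid) : Prop :=
  [/\ in_Ihalf g,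
      ieq (ibar g) (conv g k) &
      (forall g', in_Ihalf g' -> ieq (ibar g') (conv g' k) -> ieq g' g)].

Definition kappa_mat : incid := fun F H =>
  ('X - 1) ^+ rr F H *
  \sum_(G : {set T} | flat_le F G && flat_le G H)
     ((-1) ^+ rr F G * (chi F G).[-1]) *: chi G H.

Definition hbc : incid := fun F G =>
  (-1) ^+ rr F G *: homog_one_minus_inv (rr F G) (chi F G).

End Matroid.

(* Main.v *)
Require Import Defs.
From mathcomp Require Import all_boot all_order all_algebra.
From mathcomp Require Import ring zify.
Set Implicit Arguments. Unset Strict Implicit. Unset Printing Implicit Defensive.
Import GRing.Theory Num.Theory.
Local Open Scope ring_scope.

Lemma recipD n p q : recip_poly n (p + q) = recip_poly n p + recip_poly n q.
Proof. by rewrite /recip_poly -big_split; apply: eq_bigr => i _; rewrite coefD scalerDl. Qed.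
Lemma recipZ n c p : recip_poly n (c *: p) = c *: recip_poly n p.
Proof. by rewrite /recip_poly scaler_sumr; apply: eq_bigr => i _; rewrite coefZ scalerA. Qed.
Lemma recip0 n : recip_poly n 0 = 0.
Proof. by rewrite /recip_poly big1 // => i _; rewrite coef0 scale0r. Qed.
Lemma recipN n p : recip_poly n (- p) = - recip_poly n p.
Proof. by rewrite -scaleN1r recipZ scaleN1r. Qed.
Lemma recipB n p q : recip_poly n (p - q) = recip_poly n p - recip_poly n q.
Proof. by rewrite recipD recipN. Qed.
Lemma recip_sum n (I : Type) (r : seq I) (P : pred I) (F : I -> {poly int}) :
  recip_poly n (\sum_(i <- r | P i) F i) = \sum_(i <- r | P i) recip_poly n (F i).
Proof. exact: (big_morph _ (recipD n) (recip0 n)). Qed.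

Lemma sum_ord_delta n k (F : nat -> {poly int}) : (k < n)%N ->
  \sum_(i < n) ((i == k :> nat)%:R : int) *: F i = F k.
Proof.
move=> hk; rewrite (bigD1 (Ordinal hk)) //= eqxx scale1r big1 ?addr0 // => i.
by rewrite -val_eqE /= => /negbTE ->; rewrite scale0r.
Qed.

Lemma recip_Xn n k : (k <= n)%N -> recip_poly n 'X^k = 'X^(n - k).
Proof.
move=> hk; rewrite /recip_poly.
under eq_bigr do rewrite coefXn.
exact: (sum_ord_delta (fun i => 'X^(n - i))).
Qed.

Lemma coef_recip n p j :
  (recip_poly n p)`_j = if (j <= n)%N then p`_(n - j) else 0.
Proof.
rewrite /recip_poly coef_sum.
under eq_bigr do rewrite coefZ coefXn.
case: ifP => hj.
  have hk : (n - j < n.+1)%N by lia.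
  rewrite (bigD1 (Ordinal hk)) //= big1 ?addr0.
    have e : (n - (n - j) = j)%N by lia.
    by rewrite e eqxx mulr1.
  move=> i; rewrite -val_eqE /= => ne.
  case: eqP => [e|]; last by rewrite mulr0.
  have := ltn_ord i; move/eqP: ne; lia.
rewrite big1 // => i _; case: eqP => [e|]; last by rewrite mulr0.
have := ltn_ord i; lia.
Qed.

Lemma poly_expand n (p : {poly int}) : (size p <= n)%N ->
  p = \sum_(i < n) p`_i *: 'X^i.
Proof.
move=> hp; apply/polyP => j; rewrite coef_sum.
under eq_bigr do rewrite coefZ coefXn.
case: (ltnP j n) => hj.
  rewrite (bigD1 (Ordinal hj)) //= eqxx mulr1 big1 ?addr0 // => i.
  by rewrite -val_eqE /= eq_sym => /negbTE ->; rewrite mulr0.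
rewrite (leq_sizeP _ _ hp) // big1 // => i _.
by case: eqP => [e|]; [have := ltn_ord i; lia | rewrite mulr0].
Qed.

Lemma mulZXn (a b : int) i j :
  (a *: 'X^i) * (b *: 'X^j) = (a * b) *: ('X^(i + j) : {poly int}).
Proof. by rewrite -scalerAl -scalerAr scalerA exprD. Qed.

Lemma recip_mul m n (p q : {poly int}) : (size p <= m.+1)%N -> (size q <= n.+1)%N ->
  recip_poly (m + n) (p * q) = recip_poly m p * recip_poly n q.
Proof.
move=> hp hq.
have -> : recip_poly m p * recip_poly n q = \sum_(i < m.+1) \sum_(j < n.+1)
    (p`_i * q`_j) *: 'X^(m - i + (n - j)).
  rewrite /recip_poly mulr_suml; apply: eq_bigr => i _.
  by rewrite mulr_sumr; apply: eq_bigr => j _; rewrite mulZXn.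
rewrite {1}(poly_expand hp) {1}(poly_expand hq) mulr_suml recip_sum.
apply: eq_bigr => i _.
rewrite mulr_sumr recip_sum; apply: eq_bigr => j _.
rewrite mulZXn recipZ recip_Xn; last by have := ltn_ord i; have := ltn_ord j; lia.
congr (_ *: 'X^_).
have := ltn_ord i; have := ltn_ord j; lia.
Qed.

Lemma size_exp_le (p : {poly int}) m k : (size p <= m.+1)%N ->
  (size (p ^+ k) <= (k * m).+1)%N.
Proof.
move=> hp; apply: leq_trans (size_exp_leq _ _) _.
rewrite ltnS mulnC leq_mul2l; apply/orP; right; lia.
Qed.

Lemma recip_exp m k (p : {poly int}) : (size p <= m.+1)%N ->
  recip_poly (k * m) (p ^+ k) = recip_poly m p ^+ k.
Proof.
move=> hp; elim: k => [|k IH].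
  by rewrite mul0n !expr0 -(expr0 'X) recip_Xn.
rewrite mulSn !exprS recip_mul // ?IH //; exact: size_exp_le.
Qed.

Lemma recip_fix r (d : {poly int}) : (size d <= r)%N -> recip_poly (2 * r) d = d -> d = 0.
Proof.
move=> hs e; apply/polyP => i; rewrite coef0.
case: (ltnP i r) => hi; last by apply: (leq_sizeP _ _ hs).
have := congr1 (fun p : {poly int} => p`_(2 * r - i)) e => /=.
rewrite coef_recip ifT; last by lia.
have -> : (2 * r - (2 * r - i) = i)%N by lia.
move=> ->; apply: (leq_sizeP _ _ hs); lia.
Qed.

Lemma homogD n p q : homog_one_minus_inv n (p + q) =
  homog_one_minus_inv n p + homog_one_minus_inv n q.
Proof. by rewrite /homog_one_minus_inv -big_split; apply: eq_bigr => i _; rewrite coefD scalerDl. Qed.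
Lemma homogZ n c p : homog_one_minus_inv n (c *: p) = c *: homog_one_minus_inv n p.
Proof. by rewrite /homog_one_minus_inv scaler_sumr; apply: eq_bigr => i _; rewrite coefZ scalerA. Qed.
Lemma homog0 n : homog_one_minus_inv n 0 = 0.
Proof. by rewrite /homog_one_minus_inv big1 // => i _; rewrite coef0 scale0r. Qed.
Lemma homog_sum n (I : Type) (r : seq I) (P : pred I) (F : I -> {poly int}) :
  homog_one_minus_inv n (\sum_(i <- r | P i) F i) =
  \sum_(i <- r | P i) homog_one_minus_inv n (F i).
Proof. exact: (big_morph _ (homogD n) (homog0 n)). Qed.
Lemma homog_Xn n k : (k <= n)%N ->
  homog_one_minus_inv n 'X^k = ('X - 1) ^+ k * 'X^(n - k).
Proof.
move=> hk; rewrite /homog_one_minus_inv.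
under eq_bigr do rewrite coefXn.
exact: (sum_ord_delta (fun i => ('X - 1) ^+ i * 'X^(n - i))).
Qed.

Lemma sgsq (n : nat) : ((-1) ^+ n * (-1) ^+ n : {poly int}) = 1.
Proof. by rewrite -exprMn mulrNN mulr1 expr1n. Qed.

Lemma size_mul_le (p q : {poly int}) m n : (size p <= m.+1)%N -> (size q <= n.+1)%N ->
  (size (p * q)%R <= (m + n).+1)%N.
Proof. move=> hp hq; apply: leq_trans (size_polyMleq p q) _; lia. Qed.

Lemma size_le_coef (p : {poly int}) n : (size p <= n.+1)%N -> p`_n = 0 -> (size p <= n)%N.
Proof.
move=> hp hn; apply/leq_sizeP => j hj.
case: (eqVneq j n) => [->//|ne]; apply: (leq_sizeP _ _ hp); lia.
Qed.

Lemma recip2N : recip_poly 2 (- 'X) = - 'X.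
Proof. by rewrite recipN -(expr1 'X) recip_Xn. Qed.
Lemma recip2_1X : recip_poly 2 (1 - 'X) = 'X * ('X - 1).
Proof. rewrite recipB -(expr0 'X) -{2}(expr1 'X) !recip_Xn //=; rewrite expr0 expr1 exprS expr1; ring. Qed.
Lemma recip2_XX : recip_poly 2 ('X * ('X - 1)) = 1 - 'X.
Proof.
have -> : ('X * ('X - 1) : {poly int}) = 'X^2 - 'X^1 by rewrite expr1 exprS expr1; ring.
by rewrite recipB !recip_Xn //= expr0 expr1.
Qed.
Section Proof.
Variables (T : finType) (M : matroid T).

Local Notation le := (flat_le M).
Local Notation rr := (rr M).

Lemma le_refl F : is_flat M F -> le F F.
Proof. by move=> hF; rewrite /flat_le hF subxx. Qed.

Lemma le_trans F G H : le F G -> le G H -> le F H.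
Proof.
case/and3P=> hF _ sFG /and3P[_ hH sGH]; rewrite /flat_le hF hH.
exact: subset_trans sFG sGH.
Qed.

Lemma le_anti F G : le F G -> le G F -> F = G.
Proof.
case/and3P=> _ _ sFG /and3P[_ _ sGF]; apply/eqP; rewrite eqEsubset sFG sGF //.
Qed.

Lemma le_flatl F G : le F G -> is_flat M F.
Proof. by case/and3P. Qed.
Lemma le_flatr F G : le F G -> is_flat M G.
Proof. by case/and3P. Qed.

Lemma le_card F G : le F G -> F != G -> (#|F| < #|G|)%N.
Proof.
case/and3P=> _ _ sFG nFG; apply: proper_card; rewrite properEneq nFG sFG //.
Qed.
Lemma le_card' F G : le F G -> (#|F| <= #|G|)%N.
Proof. by case/and3P=> _ _ sFG; apply: subset_leq_card. Qed.

Lemma rr_add F G H : le F G -> le G H -> (rr F G + rr G H)%N = rr F H.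
Proof.
case/and3P=> _ _ sFG /and3P[_ _ sGH]; rewrite /Defs.rr.
have := mrank_mono M sFG; have := mrank_mono M sGH; lia.
Qed.

Lemma rr0 F : rr F F = 0%N.
Proof. by rewrite /Defs.rr subnn. Qed.

Lemma interval1 F : is_flat M F -> forall E, (le F E && le E F) = (E == F).
Proof.
move=> hF E; apply/idP/eqP => [/andP[h1 h2]|->]; first by rewrite (le_anti h2 h1).
by rewrite le_refl.
Qed.

Lemma mob_aux_fuel n m (F G : {set T}) : (#|G| <= n)%N -> (#|G| <= m)%N ->
  mob_aux M n F G = mob_aux M m F G.
Proof.
elim: n m G => [|n IH] [|m] G hn hm //=.
- case: eqP => // nFG; case hle: (flat_le M F G) => //.
  have := le_card hle (introN eqP nFG); lia.
- case: eqP => // nFG; case hle: (flat_le M F G) => //.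
  have := le_card hle (introN eqP nFG); lia.
- case: eqP => // nFG; case hle: (flat_le M F G) => //.
  congr (- _); apply: eq_bigr => E /andP[/andP[_ hEG] nEG].
  have := le_card hEG nEG; move=> h; apply: IH; lia.
Qed.

Lemma mob_refl F : mobius M F F = 1.
Proof. by rewrite /mobius; case: #|F| => /=; rewrite eqxx. Qed.

Lemma mob_rec F G : le F G -> F != G ->
  mobius M F G = - \sum_(E : {set T} | le F E && le E G && (E != G)) mobius M F E.
Proof.
move=> hle nFG; rewrite /mobius.
have := le_card hle nFG; case eq: #|G| => [|n] // _ /=.
rewrite (negbTE nFG) hle; congr (- _); apply: eq_bigr => E /andP[/andP[_ hEG] nEG].
apply: mob_aux_fuel => //; have := le_card hEG nEG; lia.
Qed.

Lemma mob_zeta F G : le F G ->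
  \sum_(E : {set T} | le F E && le E G) mobius M F E = (F == G)%:R.
Proof.
move=> hle; case: (eqVneq F G) => [<-|nFG].
  rewrite (big_pred1 F) ?mob_refl // => E; rewrite /= interval1 //; exact: le_flatl hle.
rewrite (bigD1 G) /=; last by rewrite hle le_refl //; exact: le_flatr hle.
by rewrite (mob_rec hle nFG) addNr.
Qed.


Local Notation conv := (conv M).
Local Notation ieq := (ieq M).
Local Notation delta := (@delta T).

Lemma conv_assoc (f g k : incid T) F H :
  conv (conv f g) k F H = conv f (conv g k) F H.
Proof.
rewrite /Defs.conv.
transitivity (\sum_(G2 : {set T}) \sum_(G1 : {set T})
  if [&& le F G1, le G1 G2 & le G2 H] then f F G1 * g G1 G2 * k G2 H else 0).
  rewrite big_mkcond; apply: eq_bigr => G2 _; case: ifP => h2.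
    rewrite big_distrl big_mkcond; apply: eq_bigr => G1 _ /=.
    by case/andP: h2 => _ ->; rewrite andbT andbA.
  rewrite big1 // => G1 _; case: ifP => // /and3P[h1 h3 h4].
  by rewrite (le_trans h1 h3) h4 in h2.
rewrite exchange_big [RHS]big_mkcond; apply: eq_bigr => G1 _; case: ifP => h1.
  rewrite big_distrr [RHS]big_mkcond; apply: eq_bigr => G2 _ /=.
  case/andP: h1 => -> _ /=; case: ifP => // _; by rewrite mulrA.
rewrite big1 // => G2 _; case: ifP => // /and3P[h3 h4 h5].
by rewrite h3 (le_trans h4 h5) in h1.
Qed.

Lemma conv_eql (f f' g : incid T) F H : ieq f f' -> conv f g F H = conv f' g F H.
Proof. by move=> e; apply: eq_bigr => G /andP[h _]; rewrite e. Qed.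

Lemma conv_eqr (f g g' : incid T) F H : ieq g g' -> conv f g F H = conv f g' F H.
Proof. by move=> e; apply: eq_bigr => G /andP[_ h]; rewrite e. Qed.

Lemma conv_deltal (f : incid T) F H : le F H -> conv delta f F H = f F H.
Proof.
move=> hle; rewrite /Defs.conv (bigD1 F) /=; last by rewrite hle le_refl // (le_flatl hle).
rewrite /Defs.delta eqxx mul1r big1 ?addr0 // => G /andP[_ nG].
by rewrite eq_sym (negbTE nG) mul0r.
Qed.

Lemma conv_deltar (f : incid T) F H : le F H -> conv f delta F H = f F H.
Proof.
move=> hle; rewrite /Defs.conv (bigD1 H) /=; last by rewrite hle le_refl // (le_flatr hle).
rewrite /Defs.delta eqxx mulr1 big1 ?addr0 // => G /andP[_ nG].
by rewrite (negbTE nG) mulr0.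
Qed.

Lemma conv_sc (a : {poly int}) (f g : incid T) F H :
  conv (fun F G => a ^+ rr F G * f F G) (fun F G => a ^+ rr F G * g F G) F H
  = if le F H then a ^+ rr F H * conv f g F H else 0.
Proof.
case: ifP => hFH.
  rewrite /Defs.conv mulr_sumr; apply: eq_bigr => G /andP[h1 h2].
  rewrite -(rr_add h1 h2) exprD; ring.
rewrite /Defs.conv big1 // => G /andP[h1 h2]; by rewrite (le_trans h1 h2) in hFH.
Qed.

Definition Z (a : {poly int}) : incid T := fun F G => a ^+ rr F G.
Definition Mu (a : {poly int}) : incid T := fun F G => (mobius M F G)%:P * a ^+ rr F G.
Definition ones : incid T := fun F G => 1.
Definition mu1 : incid T := fun F G => (mobius M F G)%:P.

Lemma mu1_ones : ieq (conv mu1 ones) delta.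
Proof.
move=> F G hle; rewrite /Defs.conv.
under eq_bigr do rewrite mulr1.
by rewrite -rmorph_sum /= mob_zeta // /Defs.delta; case: (F == G).
Qed.

Lemma ones_mu1 : ieq (conv ones mu1) delta.
Proof.
pose P := conv ones mu1.
have key : forall F H, le F H -> conv mu1 P F H = mu1 F H.
  move=> F H hle; rewrite /P -conv_assoc (conv_eql _ _ _ mu1_ones) conv_deltal //.
suff: forall n F H, le F H -> (#|H| - #|F| <= n)%N -> P F H = delta F H.
  by move=> h F H hle; apply: (h _ F H hle).
elim=> [|n IH] F H hle hn.
- have eFH : F = H.
    apply/eqP; apply: contraT => nFH; have := le_card hle nFH; lia.
  subst H; have := key F F hle.
  rewrite /Defs.conv (big_pred1 F); last by move=> E; rewrite /= interval1 // (le_flatl hle).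
  by rewrite /mu1 mob_refl mul1r /Defs.delta eqxx.
- have := key F H hle.
  rewrite /Defs.conv (bigD1 F) /=; last by rewrite hle le_refl // (le_flatl hle).
  rewrite /mu1 mob_refl mul1r.
  under eq_bigr => G /andP[/andP[h1 h2] nG].
    rewrite [P G H](IH G H h2); last first.
      have nFG : F != G by rewrite eq_sym. have := le_card h1 nFG.
      have := le_card' h2; lia.
    over.
  case: (eqVneq F H) => [eFH|nFH].
    subst H; rewrite big1 ?addr0 //; first by rewrite mob_refl /Defs.delta eqxx.
    move=> G /andP[/andP[h1 h2] nG]; by rewrite (le_anti h2 h1) eqxx in nG.
  rewrite (bigD1 H) /=; last by rewrite hle le_refl ?(le_flatr hle) // eq_sym.
  rewrite /Defs.delta eqxx mulr1 big1 ?addr0.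
    by move/(canRL (addrK _)); rewrite subrr (negbTE nFH).
  by move=> G /andP[_ nGH]; rewrite (negbTE nGH) mulr0.
Qed.

Lemma Mu_Z a : ieq (conv (Mu a) (Z a)) delta.
Proof.
move=> F H hle.
have -> : conv (Mu a) (Z a) F H = conv (fun F G => a ^+ rr F G * mu1 F G)
    (fun F G => a ^+ rr F G * ones F G) F H.
  by rewrite /Defs.conv; apply: eq_bigr => G _; rewrite /Mu /Z /mu1 /ones mulr1 [_%:P * _]mulrC.
rewrite conv_sc hle mu1_ones // /Defs.delta; case: eqP => [<-|]; last by rewrite mulr0.
by rewrite rr0 mulr1.
Qed.

Lemma Z_Mu a : ieq (conv (Z a) (Mu a)) delta.
Proof.
move=> F H hle.
have -> : conv (Z a) (Mu a) F H = conv (fun F G => a ^+ rr F G * ones F G)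
    (fun F G => a ^+ rr F G * mu1 F G) F H.
  by rewrite /Defs.conv; apply: eq_bigr => G _; rewrite /Mu /Z /mu1 /ones mulr1 [_ * a ^+ _]mulrC.
rewrite conv_sc hle ones_mu1 // /Defs.delta; case: eqP => [<-|]; last by rewrite mulr0.
by rewrite rr0 mulr1.
Qed.


Lemma chi_conv F G : chi M F G = conv mu1 (Z 'X) F G.
Proof. by rewrite /chi /Defs.conv; apply: eq_bigr => E _; rewrite /mu1 /Z intz mul_polyC. Qed.

Lemma hbc_eq : ieq (hbc M) (conv (Mu (- 'X)) (Z (1 - 'X))).
Proof.
move=> F G hle; rewrite /hbc /chi homog_sum scaler_sumr /Defs.conv.
apply: eq_bigr => E /andP[h1 h2].
rewrite homogZ homog_Xn; last by rewrite -(rr_add h1 h2) leq_addl.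
rewrite -(rr_add h1 h2) addnK intz /Mu /Z.
rewrite scalerA -mul_polyC rmorphM rmorphXn /= polyCN polyC1.
rewrite exprD (_ : (1 - 'X : {poly int}) = - ('X - 1)); last by rewrite opprB.
rewrite [(- 'X) ^+ _]exprNn [(- ('X - 1)) ^+ _]exprNn; ring.
Qed.

Lemma kappa_eq : ieq (kappa_mat M) (conv (Mu (1 - 'X)) (Z ('X * ('X - 1)))).
Proof.
move=> F H hle.
have eA : ieq (fun F G => ((-1) ^+ rr F G * (chi M F G).[-1])%:P) (conv (Mu (-1)) ones).
  move=> F' G hle'; rewrite /chi horner_sum mulr_sumr rmorph_sum /Defs.conv.
  apply: eq_bigr => E /andP[h1 h2].
  rewrite hornerZ hornerXn intz -(rr_add h1 h2) /Mu /ones !rmorphM /= !rmorphXn /= polyCN polyC1.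
  rewrite exprD mulr1.
  transitivity ((mobius M F' E)%:P * (-1) ^+ rr F' E * ((-1) ^+ rr E G * (-1) ^+ rr E G)).
    ring.
  by rewrite sgsq mulr1.
have e1 : kappa_mat M F H = ('X - 1) ^+ rr F H *
    conv (fun F G => ((-1) ^+ rr F G * (chi M F G).[-1])%:P) (chi M) F H.
  by rewrite /kappa_mat /Defs.conv; congr (_ * _); apply: eq_bigr => G _; rewrite mul_polyC.
rewrite e1 (conv_eql _ _ _ eA) (conv_eqr _ _ _ (g' := conv mu1 (Z 'X))); last first.
  by move=> ? ? _; rewrite chi_conv.
rewrite conv_assoc (conv_eqr _ _ _ (g' := Z 'X)); last first.
  by move=> G1 G2 h; rewrite -conv_assoc (conv_eql _ _ _ ones_mu1) conv_deltal.
have := conv_sc ('X - 1) (Mu (-1)) (Z 'X) F H; rewrite hle => <-.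
rewrite /Defs.conv; apply: eq_bigr => G _; rewrite /Mu /Z.
rewrite (_ : (1 - 'X : {poly int}) = (-1) * ('X - 1)); last by ring.
rewrite !exprMn; ring.
Qed.

Lemma recipCM n c p : recip_poly n (c%:P * p) = c%:P * recip_poly n p.
Proof. by rewrite !mul_polyC recipZ. Qed.

Lemma size_le3 (a : {poly int}) k : (size a <= 3)%N -> (size (a ^+ k) <= (k * 2).+1)%N.
Proof. by move=> h; apply: size_exp_le. Qed.

Lemma recip_conv (f : incid T) (a b : {poly int}) F G : le F G ->
  (size a <= 3)%N -> (size b <= 3)%N ->
  f F G = conv (Mu a) (Z b) F G ->
  recip_poly (rho M F G) (f F G) = conv (Mu (recip_poly 2 a)) (Z (recip_poly 2 b)) F G.
Proof.
move=> hle ha hb ->; rewrite /Defs.conv recip_sum; apply: eq_bigr => E /andP[h1 h2].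
rewrite /Mu /Z -mulrA recipCM.
have -> : rho M F G = (rr F E * 2 + rr E G * 2)%N by rewrite /rho -(rr_add h1 h2); lia.
by rewrite recip_mul ?size_le3 // !recip_exp // mulrA.
Qed.

Lemma size_m : forall (p : {poly int}), (size p <= 2)%N -> (size p <= 3)%N.
Proof. by move=> p h; apply: leq_trans h _. Qed.

Lemma size_NX : (size (- 'X : {poly int}) <= 2)%N.
Proof. by rewrite size_polyN size_polyX. Qed.
Lemma size_1X : (size (1 - 'X : {poly int})%R <= 2)%N.
Proof. by rewrite -opprB size_polyN -polyC1 size_XsubC. Qed.
Lemma size_XX : (size ('X * ('X - 1) : {poly int})%R <= 3)%N.
Proof. by apply: (size_mul_le (m := 1) (n := 1)); rewrite ?size_polyX // -polyC1 size_XsubC. Qed.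

Lemma ibar_hbc : ieq (ibar M (hbc M)) (conv (Mu (- 'X)) (Z ('X * ('X - 1)))).
Proof.
move=> F G hle; rewrite /ibar (recip_conv hle _ _ (hbc_eq hle)).
  by rewrite recip2N recip2_1X.
exact: size_m size_NX. exact: size_m size_1X.
Qed.

Lemma ibar_kappa : ieq (ibar M (kappa_mat M)) (conv (Mu ('X * ('X - 1))) (Z (1 - 'X))).
Proof.
move=> F G hle; rewrite /ibar (recip_conv hle _ _ (kappa_eq hle)).
  by rewrite recip2_1X recip2_XX.
exact: size_m size_1X. exact: size_XX.
Qed.


Lemma conv_FF (f g : incid T) F : is_flat M F -> conv f g F F = f F F * g F F.
Proof.
move=> hF; rewrite /Defs.conv (big_pred1 F) // => E; by rewrite /= interval1.
Qed.

Lemma MuZ_FF a b F : is_flat M F -> conv (Mu a) (Z b) F F = 1.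
Proof. by move=> hF; rewrite conv_FF // /Mu /Z mob_refl rr0 !expr0 !mulr1. Qed.

Lemma kappa_FF F : is_flat M F -> kappa_mat M F F = 1.
Proof. by move=> hF; rewrite (kappa_eq (le_refl hF)) MuZ_FF. Qed.

Lemma hbc_FF F : is_flat M F -> hbc M F F = 1.
Proof. by move=> hF; rewrite (hbc_eq (le_refl hF)) MuZ_FF. Qed.

Lemma size_term (c : int) (p q : {poly int}) x y m :
  (size p <= 2)%N -> (size q <= m.+1)%N ->
  (size (c%:P * p ^+ x * q ^+ y)%R <= (x + y * m).+1)%N.
Proof.
move=> hp hq.
apply: leq_trans (size_mul_le (m := x) (n := y * m) _ _) _.
- apply: leq_trans (size_mul_le (m := 0) (n := x * 1) _ _) _.
  + exact: size_polyC_leq1.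
  + exact: size_exp_le.
  + lia.
- exact: size_exp_le.
- lia.
Qed.

Lemma size_kappa : in_Irho M (kappa_mat M).
Proof.
move=> F G hle; rewrite (kappa_eq hle) /Defs.conv.
apply: (leq_trans (size_sum _ _ _)); apply/bigmax_leqP => E /andP[h1 h2].
rewrite /Mu /Z /rho -(rr_add h1 h2).
apply: leq_trans (size_term _ _ _ size_1X size_XX) _; lia.
Qed.

Lemma size_hbc F G : le F G -> (size (hbc M F G) <= (rr F G).+1)%N.
Proof.
move=> hle; rewrite (hbc_eq hle) /Defs.conv.
apply: (leq_trans (size_sum _ _ _)); apply/bigmax_leqP => E /andP[h1 h2].
rewrite /Mu /Z -(rr_add h1 h2).
apply: leq_trans (size_term (m := 1) _ _ _ size_NX size_1X) _; lia.
Qed.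

Lemma coef_XsubC_top y : (('X - 1) ^+ y : {poly int})`_y = 1.
Proof.
have := size_exp_XsubC y (1 : int); have /monicP := monic_exp y (monicXsubC (1 : int)).
rewrite /lead_coef polyC1 => h1 h2; by rewrite h2 in h1.
Qed.

Lemma coef_hbc F G : le F G -> F != G -> (hbc M F G)`_(rr F G) = 0.
Proof.
move=> hle nFG; rewrite (hbc_eq hle) /Defs.conv coef_sum.
transitivity (\sum_(E | le F E && le E G) (mobius M F E) * (-1) ^+ rr F G).
  apply: eq_bigr => E /andP[h1 h2]; rewrite /Mu /Z -(rr_add h1 h2).
  have -> : (mobius M F E)%:P * (- 'X) ^+ rr F E * (1 - 'X) ^+ rr E G =
      ((mobius M F E) * (-1) ^+ (rr F E + rr E G))%:P * ('X^(rr F E) * ('X - 1) ^+ rr E G).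
    rewrite rmorphM rmorphXn /= polyCN polyC1 exprD.
    rewrite (_ : (1 - 'X : {poly int}) = - ('X - 1)); last by rewrite opprB.
    rewrite [(- 'X) ^+ _]exprNn [(- ('X - 1)) ^+ _]exprNn; ring.
  rewrite coefCM coefXnM ltnNge leq_addr /= addKn coef_XsubC_top mulr1 //.
by rewrite -big_distrl /= mob_zeta // (negbTE nFG) mul0r.
Qed.

Lemma hbc_half : in_Ihalf M (hbc M).
Proof.
split.
- move=> F G hle; apply: leq_trans (size_hbc hle) _; rewrite /rho; lia.
- exact: hbc_FF.
- move=> F G hle nFG; apply: size_le_coef; [exact: size_hbc | exact: coef_hbc].
Qed.

Lemma kernel_kappa : is_kernel M (kappa_mat M).
Proof.
split.
- exact: size_kappa.
- exact: kappa_FF.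
- move=> F H hle.
  rewrite (conv_eql _ _ _ kappa_eq) (conv_eqr _ _ _ ibar_kappa) conv_assoc.
  rewrite (conv_eqr _ _ _ (g' := Z (1 - 'X))); first exact: Mu_Z hle.
  by move=> G1 G2 h; rewrite -conv_assoc (conv_eql _ _ _ (Z_Mu _)) conv_deltal.
- move=> F H hle.
  rewrite (conv_eql _ _ _ ibar_kappa) (conv_eqr _ _ _ kappa_eq) conv_assoc.
  rewrite (conv_eqr _ _ _ (g' := Z ('X * ('X - 1)))); first exact: Mu_Z hle.
  by move=> G1 G2 h; rewrite -conv_assoc (conv_eql _ _ _ (Z_Mu _)) conv_deltal.
Qed.

Lemma hbc_KLS : ieq (ibar M (hbc M)) (conv (hbc M) (kappa_mat M)).
Proof.
move=> F G hle; rewrite (ibar_hbc hle) (conv_eql _ _ _ hbc_eq) (conv_eqr _ _ _ kappa_eq).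
rewrite conv_assoc (conv_eqr _ _ _ (g' := Z ('X * ('X - 1)))) //.
by move=> G1 G2 h; rewrite -conv_assoc (conv_eql _ _ _ (Z_Mu _)) conv_deltal.
Qed.

Lemma KLS_unique (g' : incid T) : in_Ihalf M g' ->
  ieq (ibar M g') (conv g' (kappa_mat M)) -> ieq g' (hbc M).
Proof.
case=> _ g1 gs hg F H hle.
apply/eqP; rewrite -subr_eq0; apply/eqP.
pose d := fun F G => g' F G - hbc M F G.
have core : forall H', le F H' ->
    (forall G, le F G -> le G H' -> G != H' -> d F G = 0) -> d F H' = 0.
  move=> H' hle' IH'.
  case: (eqVneq F H') => [eFH|nFH].
    subst H'; by rewrite /d g1 ?hbc_FF ?subrr // (le_flatl hle').
  have e : recip_poly (rho M F H') (d F H') = d F H'.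
    rewrite /d recipB.
    have -> : recip_poly (rho M F H') (g' F H') = conv g' (kappa_mat M) F H' by exact: hg.
    have -> : recip_poly (rho M F H') (hbc M F H') = conv (hbc M) (kappa_mat M) F H'.
      exact: hbc_KLS.
    rewrite /Defs.conv -sumrB (bigD1 H') /=; last by rewrite hle' le_refl ?(le_flatr hle').
    rewrite kappa_FF ?(le_flatr hle') // !mulr1 big1 ?addr0 //.
    move=> G /andP[/andP[h1 h2] nG]; rewrite -mulrBl.
    by have := IH' G h1 h2 nG; rewrite /d => ->; rewrite mul0r.
  apply: (recip_fix (r := rr F H')) e.
  rewrite /d; apply: leq_trans (size_polyD _ _) _; rewrite size_polyN geq_max.
  rewrite gs //; have := size_le_coef (size_hbc hle') (coef_hbc hle' nFH); by [].
suff: forall n H', le F H' -> (#|H'| <= n)%N -> d F H' = 0.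
  by move=> h; exact: (h _ H hle (leqnn _)).
elim=> [|n IH] H' hle' hn; apply: core hle' _ => G h1 h2 nG.
  have := le_card h2 nG; lia.
apply: IH h1 _; have := le_card h2 nG; lia.
Qed.

End Proof.

Theorem proposition2p17 (T : finType) (M : matroid T) :
  is_kernel M (kappa_mat M) /\ is_left_KLS M (kappa_mat M) (hbc M).
Proof.
split; first exact: kernel_kappa.
split; [exact: hbc_half | exact: hbc_KLS | exact: KLS_unique].
Qed.
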